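(* Let $\Sigma_{\mathrm{D}}=(\mathcal{S}_{\mathrm{D}},\mathcal{A}_{\mathrm{D}},\Delta,\overline{g},\underline{g})$ be a finite nondeterministic transition system as in the context and let $\gamma\in(0,1)$. Then there exist deterministic maximally and minimally optimal policies for $\Sigma_{\mathrm{D}}$; in particular they are given by $$\overline{\pi}^\star(s)=\arg\max_{a}\ \overline{q}^\star(s,a),\qquad \underline{\pi}^\star(s)=\arg\max_{a}\ \underline{q}^\star(s,a),$$ that is, $\overline{v}_{\overline{\pi}^\star}=\overline{v}^\star$ and $\underline{v}_{\underline{\pi}^\star}=\underline{v}^\star$.
   Context: $\mathcal{S}_{\mathrm{D}},\mathcal{A}_{\mathrm{D}}$ are finite; $\mathcal{A}_{\mathrm{D}}(s)\subseteq\mathcal{A}_{\mathrm{D}}$ are nonempty sets of enabled inputs and the maxima over $a$ are over $\mathcal{A}_{\mathrm{D}}(s)$; for $a\in\mathcal{A}_{\mathrm{D}}(s)$, $\Delta(s,a)\subseteq\mathcal{S}_{\mathrm{D}}$ is nonempty; $\overline{g},\underline{g}:\mathcal{S}_{\mathrm{D}}\times\mathcal{A}_{\mathrm{D}}\to\mathbb{R}$. A policy is a map $\pi$ with $\pi(s)\in\mathcal{A}_{\mathrm{D}}(s)$. For runs $s_0,s_1,\dots$ with actions $a_i\in\mathcal{A}_{\mathrm{D}}(s_i)$ and $s_{i+1}\in\Delta(s_i,a_i)$, the maximal return is $\sum_{i\ge0}\gamma^i\overline{g}(s_i,a_i)$ and the minimal return $\sum_{i\ge0}\gamma^i\underline{g}(s_i,a_i)$.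 $\overline{v}_\pi(s)$ (resp. $\underline{v}_\pi(s)$): maximum of maximal return (resp. minimum of minimal return) over runs from $s$ with $a_i=\pi(s_i)$. $\overline{q}_\pi(s,a)$ (resp. $\underline{q}_\pi(s,a)$): same but with $a_0=a$ and $a_i=\pi(s_i)$ for $i\ge1$. Optimal functions: $\overline{v}^\star=\max_\pi\overline{v}_\pi$, $\underline{v}^\star=\max_\pi\underline{v}_\pi$, $\overline{q}^\star=\max_\pi\overline{q}_\pi$, $\underline{q}^\star=\max_\pi\underline{q}_\pi$ (pointwise). A policy $\pi$ is maximally (resp. minimally) optimal if $\overline{v}_\pi=\overline{v}^\star$ (resp. $\underline{v}_\pi=\underline{v}^\star$). *)

(* Defs.v *)
From HB Require Import structures.
From mathcomp Require Import all_boot all_order all_algebra.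
From mathcomp Require Import all_classical all_reals all_analysis.
Set Implicit Arguments. Unset Strict Implicit. Unset Printing Implicit Defensive.
Import Order.TTheory GRing.Theory Num.Theory.
Local Open Scope classical_set_scope.
Local Open Scope ring_scope.

Section NDTS.
Variables (R : realType) (S A : finType).
(* en s = enabled inputs A_D(s); Delta s a = successor set; gamma discount *)
Variables (en : S -> {set A}) (Delta : S -> A -> {set S}) (gamma : R).

Definition is_policy (pi : S -> A) : Prop := forall s, pi s \in en s.

Definition is_run (s : nat -> S) (a : nat -> A) : Prop :=
  forall i, a i \in en (s i) /\ s i.+1 \in Delta (s i) (a i).

Definition disc_return (g : S -> A -> R) (s : nat -> S) (a : nat -> A) : R :=
  limn (fun n => \sum_(i < n) gamma ^+ i * g (s i) (a i)).

Definition v_returns (g : S -> A -> R) (pi : S -> A) (s0 : S) : set R :=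
  [set r | exists s a, [/\ is_run s a, s 0%N = s0,
     (forall i, a i = pi (s i)) & r = disc_return g s a]].

Definition q_returns (g : S -> A -> R) (pi : S -> A) (s0 : S) (a0 : A) : set R :=
  [set r | exists s a, [/\ is_run s a, s 0%N = s0, a 0%N = a0,
     (forall i, (0 < i)%N -> a i = pi (s i)) & r = disc_return g s a]].

Definition vmax (gb : S -> A -> R) pi s0 : R := sup (v_returns gb pi s0).
Definition vmin (gu : S -> A -> R) pi s0 : R := inf (v_returns gu pi s0).
Definition qmax (gb : S -> A -> R) pi s0 a0 : R := sup (q_returns gb pi s0 a0).
Definition qmin (gu : S -> A -> R) pi s0 a0 : R := inf (q_returns gu pi s0 a0).

Definition vmax_star gb s0 : R := sup [set vmax gb pi s0 | pi in is_policy].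
Definition vmin_star gu s0 : R := sup [set vmin gu pi s0 | pi in is_policy].
Definition qmax_star gb s0 a0 : R := sup [set qmax gb pi s0 a0 | pi in is_policy].
Definition qmin_star gu s0 a0 : R := sup [set qmin gu pi s0 a0 | pi in is_policy].

Definition max_optimal gb pi : Prop := forall s, vmax gb pi s = vmax_star gb s.
Definition min_optimal gu pi : Prop := forall s, vmin gu pi s = vmin_star gu s.

Definition greedy (q : S -> A -> R) (pi : S -> A) : Prop :=
  forall s, pi s \in en s /\ (forall a, a \in en s -> q s a <= q s (pi s)).
End NDTS.

(* Main.v *)
From HB Require Import structures.
From mathcomp Require Import all_boot all_order all_algebra.
From mathcomp Require Import all_classical all_reals all_analysis.
From mathcomp Require Import lra ring.
Require Import Defs.
Set Implicit Arguments. Unset Strict Implicit. Unset Printing Implicit Defensive.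
Import Order.TTheory GRing.Theory Num.Theory numFieldNormedType.Exports.
Local Open Scope classical_set_scope.
Local Open Scope ring_scope.

Section Geo.
Variables (R : realType) (q : R).
Hypotheses (hq0 : 0 <= q) (hq1 : q < 1).

Lemma geo_series_cvg (u : R^nat) C :
  (forall k, `|u k| <= C * q ^+ k) -> cvgn (series u).
Proof.
move=> hu; apply: (@normed_cvg _ R^o); apply: (@series_le_cvg _ _ (geometric C q)).
- by move=> n; exact: normr_ge0.
- by move=> n; exact: le_trans (normr_ge0 _) (hu n).
- exact: hu.
- by apply: is_cvg_geometric_series; rewrite ger0_norm.
Qed.

Lemma geo_cvg (u : R^nat) L K :
  (forall n, `|u n - L| <= K * q ^+ n) -> u @ \oo --> L.
Proof.
move=> hu.
apply: (@squeeze_cvgr _ _ _ _ (fun n => L - K * q ^+ n) (fun n => L + K * q ^+ n)).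
- by apply: nearW => n; have := hu n; rewrite ler_distl.
- rewrite -[X in _ --> X]subr0; apply: cvgB; first exact: cvg_cst.
  by have := @cvg_geometric R K q; rewrite ger0_norm //; apply.
- rewrite -[X in _ --> X]addr0; apply: cvgD; first exact: cvg_cst.
  by have := @cvg_geometric R K q; rewrite ger0_norm //; apply.
Qed.

Lemma lim_dist (u : R^nat) a b N :
  cvgn u -> (forall n, (N <= n)%N -> `|u n - a| <= b) -> `|limn u - a| <= b.
Proof.
move=> cu h; rewrite ler_distl; apply/andP; split.
- apply: limr_ge => //; apply: (filterS _ (nbhs_infty_ge N)) => n hn.
  by have := h n hn; rewrite ler_distl => /andP[].
- apply: limr_le => //; apply: (filterS _ (nbhs_infty_ge N)) => n hn.
  by have := h n hn; rewrite ler_distl => /andP[].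
Qed.

Lemma lim_le_geo (P : R^nat) c K :
  cvgn P -> (forall n, P n <= c + K * q ^+ n) -> limn P <= c.
Proof.
move=> cP h.
have cv : (fun n => c + K * q ^+ n) @ \oo --> c.
  apply: (@geo_cvg _ _ `|K|) => n; rewrite addrAC subrr add0r normrM normrX.
  by rewrite (ger0_norm hq0).
rewrite -(cvg_lim _ cv) //; apply: ler_lim => //; first by apply/cvg_ex; exists c.
by apply: nearW => n; exact: h.
Qed.

Lemma lim_ge_geo (P : R^nat) c K :
  cvgn P -> (forall n, c - K * q ^+ n <= P n) -> c <= limn P.
Proof.
move=> cP h.
have cv : (fun n => c - K * q ^+ n) @ \oo --> c.
  apply: (@geo_cvg _ _ `|K|) => n; rewrite addrAC subrr add0r normrN normrM normrX.
  by rewrite (ger0_norm hq0).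
rewrite -(cvg_lim _ cv) //; apply: ler_lim => //; first by apply/cvg_ex; exists c.
by apply: nearW => n; exact: h.
Qed.

Lemma zero_geo (c K : R) : (forall n, `|c| <= K * q ^+ n) -> c = 0.
Proof.
move=> h.
have cv : (fun n : nat => c) @ \oo --> 0.
  by apply: (@geo_cvg _ _ K) => n; rewrite subr0.
by rewrite -(cvg_lim _ cv) // lim_cst.
Qed.
End Geo.

Lemma norm_le_sum (T : finType) (R : realType) (f : T -> R) x :
  `|f x| <= \sum_y `|f y|.
Proof.
rewrite (bigD1 x) //= lerDl; apply: sumr_ge0 => y _; exact: normr_ge0.
Qed.

Section MDP.
Variables (R : realType) (S A : finType) (en : S -> {set A})
  (Delta : S -> A -> {set S}) (g : S -> A -> R) (gamma : R) (b : bool).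
Hypotheses (hg0 : 0 < gamma) (hg1 : gamma < 1)
  (hen : forall s, en s != finset.set0)
  (hD : forall s a, a \in en s -> Delta s a != finset.set0).

Definition nxt (V : S -> R) s a : S :=
  if [pick x in Delta s a] is Some x0 then
    (if b then Order.arg_max x0 (fun x => x \in Delta s a) V
     else Order.arg_min x0 (fun x => x \in Delta s a) V) else s.

Lemma nxtP V s a : a \in en s ->
  nxt V s a \in Delta s a /\
  (forall t, t \in Delta s a ->
     if b then V t <= V (nxt V s a) else V (nxt V s a) <= V t).
Proof.
move=> ha; rewrite /nxt; case: pickP => [x0 hx0|h]; last first.
  by case/set0Pn: (hD ha) => x hx; have := h x; rewrite hx.
case: b.
- case: (@arg_maxP _ _ _ x0 (fun x => x \in Delta s a) V hx0) => i hi hm.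
  by split => // t ht; exact: hm.
- case: (@arg_minP _ _ _ x0 (fun x => x \in Delta s a) V hx0) => i hi hm.
  by split => // t ht; exact: hm.
Qed.

Definition Qv (V : S -> R) s a := g s a + gamma * V (nxt V s a).

Definition TV (V : S -> R) s : R :=
  if [pick a in en s] is Some a0 then
    Qv V s (Order.arg_max a0 (fun a => a \in en s) (Qv V s)) else 0.

Lemma TP V s : exists2 a, a \in en s &
  (TV V s = Qv V s a /\ forall a', a' \in en s -> Qv V s a' <= TV V s).
Proof.
rewrite /TV; case: pickP => [a0 ha0|h]; last first.
  by case/set0Pn: (hen s) => x hx; have := h x; rewrite hx.
case: (@arg_maxP _ _ _ a0 (fun a => a \in en s) (Qv V s) ha0) => i hi hm.
by exists i => //; split => // a' ha'; exact: hm.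
Qed.

Lemma nxt_lip V U e s a : a \in en s -> (forall x, `|V x - U x| <= e) ->
  `|V (nxt V s a) - U (nxt U s a)| <= e.
Proof.
move=> ha h; have [hV1 hV2] := nxtP V ha; have [hU1 hU2] := nxtP U ha.
have := hV2 _ hU1; have := hU2 _ hV1.
have := h (nxt V s a); have := h (nxt U s a); rewrite !ler_norml.
move=> /andP[h1 h2] /andP[h3 h4].
by case: b => h5 h6; apply/andP; split; lra.
Qed.

Lemma TV_lip V U e : (forall x, `|V x - U x| <= e) ->
  forall s, `|TV V s - TV U s| <= gamma * e.
Proof.
move=> h s; have [aV haV [eV mV]] := TP V s; have [aU haU [eU mU]] := TP U s.
have k a : a \in en s -> `|Qv V s a - Qv U s a| <= gamma * e.
  move=> ha; rewrite /Qv opprD addrACA subrr add0r -mulrBr normrM ger0_norm ?(ltW hg0) //.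
  by rewrite ler_wpM2l ?(ltW hg0) //; exact: nxt_lip.
have := mV _ haU; have := mU _ haV; have := k _ haV; have := k _ haU.
rewrite !ler_norml => /andP[h1 h2] /andP[h3 h4] h5 h6.
by apply/andP; split; lra.
Qed.

Lemma TV_fix : exists W : S -> R, forall s, W s = TV W s.
Proof.
pose Vn n := iter n TV (fun _ => 0).
pose C := \sum_s `|TV (fun _ => 0) s|.
have C0 : 0 <= C by apply: sumr_ge0 => s _; exact: normr_ge0.
have hd n x : `|Vn n.+1 x - Vn n x| <= C * gamma ^+ n.
  elim: n x => [|n IH] x.
    by rewrite /Vn /= subr0 expr0 mulr1; exact: (norm_le_sum (TV (fun=> 0))).
  rewrite /Vn !iterS -!/(Vn _) exprS mulrCA; apply: TV_lip => y.
  by have := IH y; rewrite /Vn iterS.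
have hq0 : 0 <= gamma by exact: ltW.
have Vser x : (fun n => Vn n x) = series (fun k => Vn k.+1 x - Vn k x).
  apply/funext => n; rewrite /series /= telescope_sumr //.
  by rewrite /Vn /= subr0.
have cv x : cvgn (fun n => Vn n x).
  by rewrite Vser; apply: (@geo_series_cvg _ gamma hq0 hg1 _ C) => k; exact: hd.
pose W x := limn (fun n => Vn n x).
pose D := C / (1 - gamma).
have g1 : 1 - gamma != 0 by rewrite subr_eq0 eq_sym lt_eqF.
have DC : D * (1 - gamma) = C by rewrite /D divfK.
have D0 : 0 <= D by rewrite /D divr_ge0 // subr_ge0 ltW.
have hj n j x : `|Vn (n + j)%N x - Vn n x| <= D * (gamma ^+ n - gamma ^+ (n + j)).
  elim: j => [|j IH]; first by rewrite addn0 !subrr normr0 mulr0.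
  rewrite addnS (le_trans (ler_distD (Vn (n + j)%N x) _ _)) //.
  have := hd (n + j)%N x; rewrite exprSr.
  have -> : D * (gamma ^+ n - gamma ^+ (n + j) * gamma) =
    D * (gamma ^+ n - gamma ^+ (n + j)) + D * (1 - gamma) * gamma ^+ (n + j) by ring.
  by rewrite DC => h1; rewrite [leLHS]addrC; apply: lerD.
have tail n x : `|W x - Vn n x| <= D * gamma ^+ n.
  apply: (@lim_dist _ _ _ _ n (cv x)) => m hm.
  rewrite -(subnKC hm) (le_trans (hj _ _ x)) // ler_wpM2l // lerBlDr lerDl.
  exact: exprn_ge0.
exists W => s; apply/eqP; rewrite -subr_eq0; apply/eqP.
apply: (@zero_geo _ gamma hq0 hg1 _ (2 * D)) => n.
have e1 : `|TV W s - Vn n.+1 s| <= gamma * (D * gamma ^+ n).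
  by rewrite /Vn iterS -/(Vn n); apply: TV_lip => y; exact: tail.
have e2 := tail n.+1 s.
have : `|W s - TV W s| <= gamma * (D * gamma ^+ n) + D * gamma ^+ n.+1.
  rewrite (le_trans (ler_distD (Vn n.+1 s) _ _)) // addrC distrC lerD //.
rewrite exprS distrC => h.
apply: (le_trans h).
rewrite (_ : D * (gamma * gamma ^+ n) = gamma * (D * gamma ^+ n)); last by ring.
have hp : 0 <= D * gamma ^+ n by rewrite mulr_ge0 ?exprn_ge0.
have hY : gamma * (D * gamma ^+ n) <= D * gamma ^+ n.
  by rewrite -[leRHS]mul1r ler_wpM2r // ltW.
have -> : 2 * D * gamma ^+ n = (D * gamma ^+ n) + (D * gamma ^+ n) by ring.
exact: (lerD hY hY).
Qed.

Let M := \sum_(p : S * A) `|g p.1 p.2|.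
Let hq0 : 0 <= gamma. Proof. exact: ltW. Qed.

Lemma g_bound s a : `|g s a| <= M.
Proof. exact: (norm_le_sum (fun p : S * A => g p.1 p.2) (s, a)). Qed.

Lemma ret_cvg (s : nat -> S) (a : nat -> A) :
  cvgn (fun n => \sum_(i < n) gamma ^+ i * g (s i) (a i)).
Proof.
have -> : (fun n => \sum_(i < n) gamma ^+ i * g (s i) (a i)) =
    series (fun i => gamma ^+ i * g (s i) (a i)).
  by apply/funext => n; rewrite /series /= big_mkord.
apply: (@geo_series_cvg _ gamma hq0 hg1 _ M) => k.
rewrite normrM normrX ger0_norm // mulrC ler_wpM2r ?exprn_ge0 //.
exact: g_bound.
Qed.

Lemma ret_le (s : nat -> S) (a : nat -> A) (c : nat -> R) K :
  (forall i, `|c i| <= K) ->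
  (forall i, g (s i) (a i) + gamma * c i.+1 <= c i) ->
  disc_return gamma g s a <= c 0%N.
Proof.
move=> hK hc; rewrite /disc_return.
have hP n : \sum_(i < n) gamma ^+ i * g (s i) (a i) + gamma ^+ n * c n <= c 0%N.
  elim: n => [|n IH]; first by rewrite big_ord0 add0r expr0 mul1r.
  apply: le_trans IH; rewrite big_ord_recr /= -addrA lerD2l.
  have -> : gamma ^+ n * g (s n) (a n) + gamma ^+ n.+1 * c n.+1 =
      gamma ^+ n * (g (s n) (a n) + gamma * c n.+1) by rewrite exprSr; ring.
  by rewrite ler_wpM2l ?exprn_ge0.
apply: (@lim_le_geo _ gamma hq0 hg1 _ _ K (@ret_cvg s a)) => n.
have := hP n; have := hK n; rewrite ler_norml => /andP[h1 h2].
have : gamma ^+ n * (- K) <= gamma ^+ n * c n by rewrite ler_wpM2l ?exprn_ge0.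
rewrite mulrN [K * _]mulrC; lra.
Qed.

Lemma ret_ge (s : nat -> S) (a : nat -> A) (c : nat -> R) K :
  (forall i, `|c i| <= K) ->
  (forall i, c i <= g (s i) (a i) + gamma * c i.+1) ->
  c 0%N <= disc_return gamma g s a.
Proof.
move=> hK hc; rewrite /disc_return.
have hP n : c 0%N <= \sum_(i < n) gamma ^+ i * g (s i) (a i) + gamma ^+ n * c n.
  elim: n => [|n IH]; first by rewrite big_ord0 add0r expr0 mul1r.
  apply: (le_trans IH); rewrite big_ord_recr /= -addrA lerD2l.
  have -> : gamma ^+ n * g (s n) (a n) + gamma ^+ n.+1 * c n.+1 =
      gamma ^+ n * (g (s n) (a n) + gamma * c n.+1) by rewrite exprSr; ring.
  by rewrite ler_wpM2l ?exprn_ge0.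
apply: (@lim_ge_geo _ gamma hq0 hg1 _ _ K (@ret_cvg s a)) => n.
have := hP n; have := hK n; rewrite ler_norml => /andP[h1 h2].
have : gamma ^+ n * c n <= gamma ^+ n * K by rewrite ler_wpM2l ?exprn_ge0.
rewrite [K * _]mulrC; lra.
Qed.

Let B := M / (1 - gamma).
Let B0 : 0 <= B.
Proof.
by rewrite /B divr_ge0 ?subr_ge0 ?(ltW hg1) //; apply: sumr_ge0 => p _; exact: normr_ge0.
Qed.
Let BM : B - gamma * B = M.
Proof.
rewrite /B -{1}[M / _]mul1r -mulrBl mulrC divfK //.
by rewrite subr_eq0 eq_sym lt_eqF.
Qed.

Lemma ret_ub s a : disc_return gamma g s a <= B.
Proof.
apply: (@ret_le _ _ (fun=> B) B) => i; first by rewrite ger0_norm //; exact: B0.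
have := g_bound (s i) (a i); rewrite ler_norml => /andP[_ h]; have := BM; lra.
Qed.

Lemma ret_lb s a : - B <= disc_return gamma g s a.
Proof.
apply: (@ret_ge _ _ (fun=> - B) B) => i; first by rewrite normrN ger0_norm //; exact: B0.
have := g_bound (s i) (a i); rewrite ler_norml => /andP[h _]; have := BM; lra.
Qed.

Definition runv V (pi : S -> A) s0 : nat -> S :=
  fun i => iter i (fun x => nxt V x (pi x)) s0.

Lemma runvP V pi s0 : is_policy en pi ->
  is_run en Delta (runv V pi s0) (fun i => pi (runv V pi s0 i)).
Proof.
move=> hpi i; split; first exact: hpi.
by rewrite /runv iterS; exact: (nxtP V (hpi _)).1.
Qed.

Definition runq V (pi : S -> A) s0 a0 : nat -> S :=
  fun i => if i is i'.+1 then iter i' (fun x => nxt V x (pi x)) (nxt V s0 a0) else s0.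
Definition actq V (pi : S -> A) s0 a0 : nat -> A :=
  fun i => if i is 0 then a0 else pi (runq V pi s0 a0 i).

Lemma runqP V pi s0 a0 : is_policy en pi -> a0 \in en s0 ->
  is_run en Delta (runq V pi s0 a0) (actq V pi s0 a0).
Proof.
move=> hpi ha [|i]; split => /=.
- exact: ha.
- exact: (nxtP V ha).1.
- exact: hpi.
- exact: (nxtP V (hpi _)).1.
Qed.

Section Fix.
Variable V : S -> R.
Hypothesis hV : forall s, V s = TV V s.
Let KV := \sum_x `|V x|.
Let KVb x : `|V x| <= KV. Proof. exact: norm_le_sum. Qed.

Definition greedyV (pi : S -> A) := is_policy en pi /\ forall s, V s = Qv V s (pi s).

Lemma step_le s a t : a \in en s -> (b \/ t = nxt V s a) -> t \in Delta s a ->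
  g s a + gamma * V t <= V s.
Proof.
move=> ha hb ht; have [a' _ [_ hm]] := TP V s.
have -> : V s = TV V s := hV s.
apply: le_trans (hm a ha); rewrite /Qv lerD2l ler_wpM2l //.
case: hb => [hb|-> //]; have [_ h2] := nxtP V ha; have := h2 t ht; by rewrite hb.
Qed.

Lemma run_le pi s0 : is_policy en pi ->
  disc_return gamma g (runv V pi s0) (fun i => pi (runv V pi s0 i)) <= V s0.
Proof.
move=> hpi; apply: (@ret_le _ _ (fun i => V (runv V pi s0 i)) KV) => // i.
apply: step_le; [exact: hpi | right; by rewrite /runv iterS | ].
by rewrite /runv iterS; exact: (nxtP V (hpi _)).1.
Qed.

Lemma run_eq pi s0 : greedyV pi ->
  disc_return gamma g (runv V pi s0) (fun i => pi (runv V pi s0 i)) = V s0.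
Proof.
move=> [hpi hg]; apply/le_anti; rewrite run_le //=.
apply: (@ret_ge _ _ (fun i => V (runv V pi s0 i)) KV) => // i.
by rewrite [leLHS]hg /Qv /runv iterS.
Qed.

Lemma runq_le pi s0 a0 : is_policy en pi -> a0 \in en s0 ->
  disc_return gamma g (runq V pi s0 a0) (actq V pi s0 a0) <= Qv V s0 a0.
Proof.
move=> hpi ha.
apply: (@ret_le _ _ (fun i => if i is 0 then Qv V s0 a0 else V (runq V pi s0 a0 i))
   (`|Qv V s0 a0| + KV)) => [[|i]|[|i]] /=.
- by rewrite lerDl; apply: sumr_ge0 => x _; exact: normr_ge0.
- by rewrite (le_trans (KVb _)) // lerDr.
- by [].
- apply: step_le; [exact: hpi | right; by rewrite ?iterS |].
  by rewrite ?iterS; exact: (nxtP V (hpi _)).1.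
Qed.

Lemma runq_eq pi s0 a0 : greedyV pi -> a0 \in en s0 ->
  disc_return gamma g (runq V pi s0 a0) (actq V pi s0 a0) = Qv V s0 a0.
Proof.
move=> [hpi hg] ha; apply/le_anti; rewrite runq_le //=.
apply: (@ret_ge _ _ (fun i => if i is 0 then Qv V s0 a0 else V (runq V pi s0 a0 i))
   (`|Qv V s0 a0| + KV)) => [[|i]|[|i]] /=.
- by rewrite lerDl; apply: sumr_ge0 => x _; exact: normr_ge0.
- by rewrite (le_trans (KVb _)) // lerDr.
- by [].
- by rewrite [leLHS]hg /Qv ?iterS.
Qed.

Section MaxCase.
Hypothesis hb : b = true.

Lemma vret_le pi s0 r : v_returns en Delta gamma g pi s0 r -> r <= V s0.
Proof.
move=> [s [a [hr h0 hpi ->]]]; rewrite -h0.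
apply: (@ret_le _ _ (fun i => V (s i)) KV) => // i.
have [ha hs] := hr i; apply: step_le ha _ hs; by left; rewrite hb.
Qed.

Lemma qret_le pi s0 a0 r : a0 \in en s0 ->
  q_returns en Delta gamma g pi s0 a0 r -> r <= Qv V s0 a0.
Proof.
move=> ha [s [a [hr h0 ha0 hpi ->]]].
apply: (@ret_le _ _ (fun i => if i is 0 then Qv V s0 a0 else V (s i))
   (`|Qv V s0 a0| + KV)) => [[|i]|[|i]] /=.
- by rewrite lerDl; apply: sumr_ge0 => x _; exact: normr_ge0.
- by rewrite (le_trans (KVb _)) // lerDr.
- have [_ hs] := hr 0%N; rewrite h0 ha0 in hs.
  rewrite h0 ha0 /Qv lerD2l ler_wpM2l //.
  have [_ h2] := nxtP V ha; have := h2 _ hs; by rewrite hb.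
- have [ha' hs] := hr i.+1; apply: step_le ha' _ hs; by left; rewrite hb.
Qed.
End MaxCase.

Section MinCase.
Hypothesis hb : b = false.

Lemma vret_ge pi s0 r : greedyV pi -> v_returns en Delta gamma g pi s0 r -> V s0 <= r.
Proof.
move=> [hp hg] [s [a [hr h0 hpi ->]]]; rewrite -h0.
apply: (@ret_ge _ _ (fun i => V (s i)) KV) => // i.
have [ha hs] := hr i; rewrite hpi in ha hs *.
rewrite [leLHS]hg /Qv lerD2l ler_wpM2l //.
have [_ h2] := nxtP V ha; have := h2 _ hs; by rewrite hb.
Qed.

Lemma qret_ge pi s0 a0 r : greedyV pi -> a0 \in en s0 ->
  q_returns en Delta gamma g pi s0 a0 r -> Qv V s0 a0 <= r.
Proof.
move=> [hp hg] ha [s [a [hr h0 ha0 hpi ->]]].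
apply: (@ret_ge _ _ (fun i => if i is 0 then Qv V s0 a0 else V (s i))
   (`|Qv V s0 a0| + KV)) => [[|i]|[|i]] /=.
- by rewrite lerDl; apply: sumr_ge0 => x _; exact: normr_ge0.
- by rewrite (le_trans (KVb _)) // lerDr.
- have [_ hs] := hr 0%N; rewrite h0 ha0 in hs.
  rewrite h0 ha0 /Qv lerD2l ler_wpM2l //.
  have [_ h2] := nxtP V ha; have := h2 _ hs; by rewrite hb.
- have [ha' hs] := hr i.+1; rewrite hpi // in ha' hs *.
  rewrite [leLHS]hg /Qv lerD2l ler_wpM2l //.
  have [_ h2] := nxtP V ha'; have := h2 _ hs; by rewrite hb.
Qed.
End MinCase.
End Fix.

Lemma greedy_ex V : (forall s, V s = TV V s) -> exists pi, greedyV V pi.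
Proof.
move=> hV.
have h s : exists a, a \in en s /\ V s = Qv V s a.
  by have [a ha [e _]] := TP V s; exists a; split => //; rewrite hV e.
case: (choice h) => pi hpi; exists pi; split => s; [exact: (hpi s).1 | exact: (hpi s).2].
Qed.

Lemma greedy_of_q V (Q : S -> A -> R) pi : (forall s, V s = TV V s) ->
  (forall s a, a \in en s -> Q s a = Qv V s a) -> greedy en Q pi -> greedyV V pi.
Proof.
move=> hV hQ hgr; split => s; first exact: (hgr s).1.
have [hp hm] := hgr s; have [a ha [e hm']] := TP V s.
apply/le_anti/andP; split.
- by rewrite hV e -!hQ // hm.
- by rewrite hV hm'.
Qed.

Lemma vret_nonempty (V : S -> R) pi s0 : is_policy en pi -> v_returns en Delta gamma g pi s0 !=set0.
Proof.
move=> hpi; exists (disc_return gamma g (runv V pi s0) (fun i => pi (runv V pi s0 i))).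
by exists (runv V pi s0), (fun i => pi (runv V pi s0 i)); split => //; exact: runvP.
Qed.

Lemma qret_nonempty (V : S -> R) pi s0 a0 : is_policy en pi -> a0 \in en s0 ->
  q_returns en Delta gamma g pi s0 a0 !=set0.
Proof.
move=> hpi ha; exists (disc_return gamma g (runq V pi s0 a0) (actq V pi s0 a0)).
exists (runq V pi s0 a0), (actq V pi s0 a0); split => //; first exact: runqP.
by case.
Qed.

Lemma vret_elem V pi s0 : is_policy en pi ->
  v_returns en Delta gamma g pi s0
    (disc_return gamma g (runv V pi s0) (fun i => pi (runv V pi s0 i))).
Proof.
by move=> hpi; exists (runv V pi s0), (fun i => pi (runv V pi s0 i)); split => //; exact: runvP.
Qed.

Lemma qret_elem V pi s0 a0 : is_policy en pi -> a0 \in en s0 ->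
  q_returns en Delta gamma g pi s0 a0
    (disc_return gamma g (runq V pi s0 a0) (actq V pi s0 a0)).
Proof.
move=> hpi ha; exists (runq V pi s0 a0), (actq V pi s0 a0); split => //; first exact: runqP.
by case.
Qed.

Lemma vret_lb pi s0 : has_lbound (v_returns en Delta gamma g pi s0).
Proof. by exists (- B) => r [s [a [_ _ _ ->]]]; exact: ret_lb. Qed.
Lemma qret_lb pi s0 a0 : has_lbound (q_returns en Delta gamma g pi s0 a0).
Proof. by exists (- B) => r [s [a [_ _ _ _ ->]]]; exact: ret_lb. Qed.
Lemma vret_ub pi s0 : has_ubound (v_returns en Delta gamma g pi s0).
Proof. by exists B => r [s [a [_ _ _ ->]]]; exact: ret_ub. Qed.
Lemma qret_ub pi s0 a0 : has_ubound (q_returns en Delta gamma g pi s0 a0).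
Proof. by exists B => r [s [a [_ _ _ _ ->]]]; exact: ret_ub. Qed.

Lemma max_part : b = true ->
  (exists pi, is_policy en pi /\ max_optimal en Delta gamma g pi) /\
  (forall pi, greedy en (qmax_star en Delta gamma g) pi -> max_optimal en Delta gamma g pi).
Proof.
move=> hb; have [V hV] := TV_fix.
have [ps hps] := greedy_ex hV.
have vle pi s0 : is_policy en pi -> vmax en Delta gamma g pi s0 <= V s0.
  move=> hpi; apply: ge_sup; first exact: (vret_nonempty V).
  by move=> r hr; exact: (vret_le hV hb hr).
have veq pi s0 : greedyV V pi -> vmax en Delta gamma g pi s0 = V s0.
  move=> hgr; apply/le_anti/andP; split; first exact: vle hgr.1.
  rewrite -[leLHS](run_eq hV s0 hgr); apply: ub_le_sup; first exact: vret_ub.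
  exact: vret_elem hgr.1.
have vstar s0 : vmax_star en Delta gamma g s0 = V s0.
  apply/le_anti/andP; split.
  - apply: ge_sup; first by exists (vmax en Delta gamma g ps s0); exists ps => //; exact: hps.1.
    by move=> r [pi hpi <-]; exact: vle.
  - rewrite -[leLHS](veq ps s0 hps); apply: ub_le_sup; last by exists ps => //; exact: hps.1.
    by exists (V s0) => r [pi hpi <-]; exact: vle.
have qle pi s0 a0 : is_policy en pi -> a0 \in en s0 ->
    qmax en Delta gamma g pi s0 a0 <= Qv V s0 a0.
  move=> hpi ha; apply: ge_sup; first by apply: (qret_nonempty V) => //; exact: hps.1.
  by move=> r hr; exact: (qret_le hV hb ha hr).
have qstar s0 a0 : a0 \in en s0 -> qmax_star en Delta gamma g s0 a0 = Qv V s0 a0.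
  move=> ha; apply/le_anti/andP; split.
  - apply: ge_sup; first by exists (qmax en Delta gamma g ps s0 a0); exists ps => //; exact: hps.1.
    by move=> r [pi hpi <-]; exact: qle.
  - apply: (@le_trans _ _ (qmax en Delta gamma g ps s0 a0)).
      rewrite -[leLHS](runq_eq hV hps ha); apply: ub_le_sup; first exact: qret_ub.
      exact: qret_elem hps.1 ha.
    apply: ub_le_sup; last by exists ps => //; exact: hps.1.
    by exists (Qv V s0 a0) => r [pi hpi <-]; exact: qle.
split.
- by exists ps; split; [exact: hps.1 | move=> s; rewrite veq // vstar].
- move=> pi hgr s; have hg : greedyV V pi.
    by apply: (greedy_of_q hV _ hgr) => s' a' ha'; exact: qstar.
  by rewrite veq // vstar.
Qed.

Lemma min_part : b = false ->
  (exists pi, is_policy en pi /\ min_optimal en Delta gamma g pi) /\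
  (forall pi, greedy en (qmin_star en Delta gamma g) pi -> min_optimal en Delta gamma g pi).
Proof.
move=> hb; have [V hV] := TV_fix.
have [ps hps] := greedy_ex hV.
have vle pi s0 : is_policy en pi -> vmin en Delta gamma g pi s0 <= V s0.
  move=> hpi; apply: (@le_trans _ _ (disc_return gamma g (runv V pi s0)
     (fun i => pi (runv V pi s0 i)))); last exact: run_le.
  by apply: ge_inf; [exact: vret_lb | exact: vret_elem].
have veq pi s0 : greedyV V pi -> vmin en Delta gamma g pi s0 = V s0.
  move=> hgr; apply/le_anti/andP; split; first exact: vle hgr.1.
  apply: lb_le_inf; first by apply: (vret_nonempty V); exact: hgr.1.
  by move=> r hr; exact: (vret_ge hb hgr hr).
have vstar s0 : vmin_star en Delta gamma g s0 = V s0.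
  apply/le_anti/andP; split.
  - apply: ge_sup; first by exists (vmin en Delta gamma g ps s0); exists ps => //; exact: hps.1.
    by move=> r [pi hpi <-]; exact: vle.
  - rewrite -[leLHS](veq ps s0 hps); apply: ub_le_sup; last by exists ps => //; exact: hps.1.
    by exists (V s0) => r [pi hpi <-]; exact: vle.
have qle pi s0 a0 : is_policy en pi -> a0 \in en s0 ->
    qmin en Delta gamma g pi s0 a0 <= Qv V s0 a0.
  move=> hpi ha; apply: (@le_trans _ _ (disc_return gamma g (runq V pi s0 a0)
     (actq V pi s0 a0))); last exact: runq_le.
  by apply: ge_inf; [exact: qret_lb | exact: qret_elem].
have qstar s0 a0 : a0 \in en s0 -> qmin_star en Delta gamma g s0 a0 = Qv V s0 a0.
  move=> ha; apply/le_anti/andP; split.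
  - apply: ge_sup; first by exists (qmin en Delta gamma g ps s0 a0); exists ps => //; exact: hps.1.
    by move=> r [pi hpi <-]; exact: qle.
  - apply: (@le_trans _ _ (qmin en Delta gamma g ps s0 a0)).
      apply: lb_le_inf; first by apply: (qret_nonempty V) => //; exact: hps.1.
      by move=> r hr; exact: (qret_ge hb hps ha hr).
    apply: ub_le_sup; last by exists ps => //; exact: hps.1.
    by exists (Qv V s0 a0) => r [pi hpi <-]; exact: qle.
split.
- by exists ps; split; [exact: hps.1 | move=> s; rewrite veq // vstar].
- move=> pi hgr s; have hg : greedyV V pi.
    by apply: (greedy_of_q hV _ hgr) => s' a' ha'; exact: qstar.
  by rewrite veq // vstar.
Qed.

End MDP.

Unset Implicit Arguments.

Theorem corollary2 (R : realType) (S A : finType)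
  (en : S -> {set A}) (Delta : S -> A -> {set S}) (gb gu : S -> A -> R) (gamma : R) :
  0 < gamma < 1 ->
  (forall s, en s != finset.set0) ->
  (forall s a, a \in en s -> Delta s a != finset.set0) ->
  [/\ (exists pi, is_policy en pi /\ max_optimal en Delta gamma gb pi),
      (exists pi, is_policy en pi /\ min_optimal en Delta gamma gu pi),
      (forall pi, greedy en (qmax_star en Delta gamma gb) pi ->
         max_optimal en Delta gamma gb pi) &
      (forall pi, greedy en (qmin_star en Delta gamma gu) pi ->
         min_optimal en Delta gamma gu pi)].
Proof.
move=> /andP[hg0 hg1] hen hD.
have [m1 m2] := @max_part R S A en Delta gb gamma true hg0 hg1 hen hD erefl.
have [n1 n2] := @min_part R S A en Delta gu gamma false hg0 hg1 hen hD erefl.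
by split.
Qed.
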